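(* Let $F$ be $\mathbb{C}$ or $\mathbb{R}$ and let $\mathfrak{L}$ be a solvable (left) Leibniz algebra over $F$ of dimension $r+1$ whose nilradical is the $r$-dimensional abelian algebra $A(r)$, so that $\mathfrak{L}$ has a basis $\{n_1,\dots,n_r,x\}$ with $n_1,\dots,n_r$ a basis of $A(r)$. Let $R\in F^{r\times r}$ be the matrix defined by $[n_i,x]=\sum_j R_{ij}n_j$ (the right action of $x$ on $A(r)$). If $R$ is nonsingular, then $\mathfrak{L}$ is a Lie algebra, i.e. $[y,z]=-[z,y]$ for all $y,z\in\mathfrak{L}$.
   Context: A (left) Leibniz algebra is a vector space with bilinear product satisfying $[x,[y,z]]=[[x,y],z]+[y,[x,z]]$. Solvable: derived series $\mathfrak{L}^{(1)}=[\mathfrak{L},\mathfrak{L}]$, $\mathfrak{L}^{(n+1)}=[\mathfrak{L}^{(n)},\mathfrak{L}^{(n)}]$ eventually zero. Nilradical: the unique maximal nilpotent ideal (nilpotent meaning the lower central series $\mathfrak{L}^2=[\mathfrak{L},\mathfrak{L}]$, $\mathfrak{L}^{k+1}=[\mathfrak{L},\mathfrak{L}^k]$ eventually vanishes). $A(r)$ is the $r$-dimensional algebra with all products zero. *)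

(* Defs.v *)
From HB Require Import structures.
From mathcomp Require Import all_boot all_order all_algebra.
From mathcomp Require Import complex.
From mathcomp Require Import reals.
Set Implicit Arguments. Unset Strict Implicit. Unset Printing Implicit Defensive.
Import GRing.Theory Num.Theory.
Local Open Scope ring_scope.

Section Leibniz.
Variables (F : fieldType) (V : vectType F) (br : V -> V -> V).

Definition is_left_leibniz : Prop :=
  [/\ (forall (a : F) (y z w : V), br (a *: y + z) w = a *: br y w + br z w),
      (forall (a : F) (y z w : V), br w (a *: y + z) = a *: br w y + br w z) &
      (forall x y z : V, br x (br y z) = br (br x y) z + br y (br x z))].

(* [A, B] : the subspace spanned by all products [a, b], a in A, b in B
   (by bilinearity, spanned by products of basis vectors) *)
Definition brsp (A B : {vspace V}) : {vspace V} :=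
  <<[seq br a b | a <- vbasis A, b <- vbasis B]>>%VS.

Fixpoint derived (k : nat) : {vspace V} :=
  if k is k'.+1 then brsp (derived k') (derived k') else fullv.

Definition solvable_alg : Prop := exists k, derived k = 0%VS.

Fixpoint lcs (I : {vspace V}) (k : nat) : {vspace V} :=
  if k is k'.+1 then brsp I (lcs I k') else I.

Definition nilpotent_sub (I : {vspace V}) : Prop := exists k, lcs I k = 0%VS.

Definition is_ideal (I : {vspace V}) : Prop :=
  forall a b : V, a \in I -> br a b \in I /\ br b a \in I.

Definition is_nilradical (N : {vspace V}) : Prop :=
  [/\ is_ideal N, nilpotent_sub N &
      forall I, is_ideal I -> nilpotent_sub I -> (I <= N)%VS].

Definition abelian_sub (N : {vspace V}) : Prop :=
  forall a b : V, a \in N -> b \in N -> br a b = 0.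

End Leibniz.

Definition lemma4p2_over (F : fieldType) : Prop :=
  forall (V : vectType F) (br : V -> V -> V) (r : nat) (N : {vspace V})
         (n : r.-tuple V) (x : V) (R : 'M[F]_r),
    is_left_leibniz br ->
    solvable_alg br ->
    \dim (fullv : {vspace V}) = r.+1 ->
    is_nilradical br N -> \dim N = r -> abelian_sub br N ->
    basis_of N n -> x \notin N ->
    (forall i : 'I_r, br (tnth n i) x = \sum_(j < r) R i j *: tnth n j) ->
    R \in unitmx ->
    forall y z : V, br y z = - br z y.

(* Main.v *)
Require Import Defs.
From HB Require Import structures.
From mathcomp Require Import all_boot all_order all_algebra.
From mathcomp Require Import complex.
From mathcomp Require Import reals.
Set Implicit Arguments. Unset Strict Implicit. Unset Printing Implicit Defensive.
Import GRing.Theory Num.Theory.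
Local Open Scope ring_scope.

Lemma generic (F : fieldType) : lemma4p2_over F.
Proof.
move=> V br r N n x R [brL brR jac] _ dimV [idN _ _] dimN abN bas xN Hx Ru.
have br0l w : br 0 w = 0.
  have := brL 1 0 0 w; rewrite !scale1r addr0 => h.
  by apply: (addrI (br 0 w)); rewrite -h addr0.
have brZl a y w : br (a *: y) w = a *: br y w.
  by rewrite -[a *: y]addr0 brL br0l addr0.
have brDl y z w : br (y + z) w = br y w + br z w by rewrite -[y]scale1r brL !scale1r.
have br0r w : br w 0 = 0.
  have := brR 1 0 0 w; rewrite !scale1r addr0 => h.
  by apply: (addrI (br w 0)); rewrite -h addr0.
have brZr a y w : br w (a *: y) = a *: br w y.
  by rewrite -[a *: y]addr0 brR br0r addr0.
have brDr y z w : br w (y + z) = br w y + br w z by rewrite -[y]scale1r brR !scale1r.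
have sq a z : br (br a a) z = 0.
  by apply: (addIr (br a (br a z))); rewrite add0r -jac.
have spanN : span n = N by case/andP: bas => /eqP.
have frn : free n by case/andP: bas.
have brsum (I : finType) (G : I -> V) w : br (\sum_i G i) w = \sum_i br (G i) w.
  by apply: (big_morph (fun y => br y w)) => //; apply: brDl.
have inj u : u \in N -> br u x = 0 -> u = 0.
  rewrite -spanN => uN hu.
  have eu := coord_span uN.
  pose c := \row_i coord n i u.
  have Hc : c *m R = 0.
    apply/rowP => j; rewrite !mxE.
    have := congr1 (coord n j) hu.
    rewrite eu brsum.
    under eq_bigr => i _ do rewrite brZl -tnth_nth Hx scaler_sumr.
    rewrite exchange_big /=.
    under eq_bigr => j' _ do (under eq_bigr => i _ do rewrite scalerA; rewrite -scaler_suml (tnth_nth 0)).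
    rewrite coord_sum_free // linear0 => H; apply: etrans H.
    by apply: eq_bigr => i _; rewrite mxE.
  have c0 : c = 0 by rewrite -(mulmxK Ru c) Hc mul0mx.
  rewrite eu; apply: big1 => i _.
  by move/rowP: c0 => /(_ i); rewrite !mxE => ->; rewrite scale0r.
have decomp y : exists m c, m \in N /\ y = m + c *: x.
  have Hf : (N + <[x]>)%VS = fullv.
    apply/eqP; rewrite eqEdim subvf /= dimV.
    rewrite -dimN (ltn_leqif (dimv_leqif_eq (addvSl N <[x]>))).
    apply/negP => /eqP e; apply/negP: xN; rewrite negbK e.
    by apply: (subvP (addvSr N _)); apply: memv_line.
  have : y \in (N + <[x]>)%VS by rewrite Hf memvf.
  case/memv_addP => m mN [v /vlineP [k ->] ->].
  by exists m, k.
have anti m : m \in N -> br x m = - br m x.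
  move=> mN; apply/eqP; rewrite -subr_eq0 opprK.
  set u := br x m + br m x.
  have uN : u \in N by rewrite rpredD //; [case: (idN m x mN) | case: (idN m x mN)].
  apply/eqP; apply: inj => //.
  have := sq (m + x) x; rewrite !brDr !brDl !sq.
  by rewrite add0r addr0.
have xx : br x x = 0.
  have [m [c [mN e]]] := decomp (br x x).
  have := sq x x; rewrite {1}e brDl brZl e scalerDr addrA => h.
  have hN : br m x \in N by case: (idN m x mN).
  have c0 : c = 0.
    case: (eqVneq c 0) => // cn0; exfalso; apply/negP: xN; rewrite negbK.
    have : c *: (c *: x) = - (br m x + c *: m).
      by apply: (addrI (br m x + c *: m)); rewrite h subrr.
    move=> h2.
    have : c *: (c *: x) \in N by rewrite h2 rpredN rpredD // rpredZ.
    move/(rpredZ (c^-1 * c^-1)); rewrite !scalerA.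
    by rewrite -mulrA (mulrA c^-1 c) mulVf // mul1r mulVf // scale1r.
  move: h e; rewrite c0 !scale0r !addr0 => h e.
  by apply: inj.
have sqall y : br y y = 0.
  have [m [c [mN ->]]] := decomp y.
  by rewrite !brDl !brDr !brZl !brZr xx abN // (anti m mN) !scaler0 scalerN !add0r addr0 subrr.

move=> y z; apply/eqP; rewrite -subr_eq0 opprK.
have := sqall (y + z); rewrite !brDl !brDr !sqall add0r addr0 => ->.
by [].
Qed.

Theorem lemma4p2 (R : realType) :
  lemma4p2_over R /\ lemma4p2_over (complex R).
Proof. by split; apply: generic. Qed.
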